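(* Let $r\geq1$, let $\mathbf a=(a_1,\ldots,a_r)$ be positive integers, let $D$ be a positive common multiple of $a_1,\ldots,a_r$, and let $j\geq 1$ be an integer dividing $a_i$ for some $1\leq i\leq r$. Put $\rho_j=e^{2\pi i/j}$ and $m(j)=\#\{i:\ j\mid a_i\}$. Then for all $n\geq 0$, $$ W_{j}(n,\mathbf a) =\rho_j^{-n}\left(R_{j,m(j)}\, n^{m(j)-1} + \cdots + R_{j,2}\, n + R_{j,1}\right), \qquad R_{j,m}=\frac{1}{D}\sum_{v=0}^{D-1}\rho_j^v\, d_{\mathbf a,m-1}(v)\ (1\leq m\leq m(j)).$$
   Context: $p_{\mathbf a}(n)$ is the number of integer solutions $(x_1,\ldots,x_r)$ of $a_1x_1+\cdots+a_rx_r=n$ with all $x_i\geq 0$. It is a quasi-polynomial: there are unique functions $d_{\mathbf a,m}:\mathbb N\to\mathbb Q$ ($0\leq m\leq r-1$) with $d_{\mathbf a,m}(n+D)=d_{\mathbf a,m}(n)$ and $p_{\mathbf a}(n)=\sum_{m=0}^{r-1}d_{\mathbf a,m}(n)n^m$ for all $n\geq0$. There are also unique polynomials $P_\lambda$, indexed by the $D$-th roots of unity $\lambda$, with $p_{\mathbf a}(n)=\sum_{\lambda^D=1}P_\lambda(n)\lambda^{-n}$ for all $n\geq 0$. The Sylvester wave is defined by $W_j(n,\mathbf a)=P_{\rho_j}(n)\rho_j^{-n}$ (i.e. $P_{\rho_j}$ is the polynomial part of the quasi-polynomial $\rho_j^n p_{\mathbf a}(n)$). *)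

(* Defs.v *)
From HB Require Import structures.
From mathcomp Require Import all_boot all_order all_algebra.
From mathcomp Require Export complex.
From mathcomp Require Import reals trigo.
Set Implicit Arguments. Unset Strict Implicit. Unset Printing Implicit Defensive.
Import Order.TTheory GRing.Theory Num.Theory.
Local Open Scope ring_scope.
Local Open Scope complex_scope.

(* p_a(n): number of (x_1,...,x_r) in N^r with a_1 x_1 + ... + a_r x_r = n.
   Since all a_i >= 1, every solution has x_i <= n, so we may take x_i in 'I_(n.+1). *)
Definition p_a (r : nat) (a : 'I_r -> nat) (n : nat) : nat :=
  #|[set x : {ffun 'I_r -> 'I_n.+1} | (\sum_(i < r) a i * x i)%N == n]|.

Definition rho (R : realType) (j : nat) : R[i] :=
  (cos (2 * pi / j%:R)) +i* (sin (2 * pi / j%:R)).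

Definition mult_j (r : nat) (a : 'I_r -> nat) (j : nat) : nat :=
  #|[set i : 'I_r | (j %| a i)%N]|.

Definition is_quasipoly_decomp (r : nat) (a : 'I_r -> nat) (D : nat)
    (d : nat -> nat -> rat) : Prop :=
  (forall m n, (m < r)%N -> d m (n + D)%N = d m n) /\
  (forall n, (p_a a n)%:R = \sum_(m < r) d m n * (n%:R) ^+ m).

(* P : (roots of unity) -> polynomials, with p_a(n) = sum_{lambda^D = 1} P_lambda(n) lambda^{-n}.
   The D-th roots of unity are enumerated (without repetition) as rho_D^k, k < D. *)
Definition is_root_decomp (R : realType) (r : nat) (a : 'I_r -> nat) (D : nat)
    (P : R[i] -> {poly R[i]}) : Prop :=
  forall n : nat,
    (p_a a n)%:R = \sum_(k < D) (P (rho R D ^+ k)).[n%:R] * (rho R D ^+ k) ^- n.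

Definition sylvester_wave (R : realType) (P : R[i] -> {poly R[i]}) (j n : nat) : R[i] :=
  (P (rho R j)).[n%:R] * (rho R j) ^- n.

Definition Rcoef (R : realType) (D : nat) (d : nat -> nat -> rat) (j m : nat) : R[i] :=
  (D%:R)^-1 * \sum_(v < D) (rho R j) ^+ v * ratr (d m.-1 v).

(* Main.v *)
Require Import Defs.
From HB Require Import structures.
From mathcomp Require Import all_boot all_order all_algebra.
From mathcomp Require Import complex reals trigo.
From mathcomp Require Import ring lra zify.
Import Order.TTheory GRing.Theory Num.Theory.

Lemma cnt (T : finType) (P : pred T) : #|[set i | P i]| = count P (enum T).
Proof. rewrite cardsE cardE /enum_mem size_filter count_filter; apply: eq_count => x /=. by rewrite andbT. Qed.

Section Comb.
Variable r : nat.
Variable a : 'I_r -> nat.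
Hypothesis apos : forall i, 0 < a i.

Definition pU (L : seq 'I_r) n : nat :=
  #|[set x : {ffun 'I_r -> 'I_n.+1} |
      ((\sum_(i < r) a i * x i)%N == n) && all (fun i => nat_of_ord (x i) == 0) L]|.

Lemma pU_nil n : pU [::] n = p_a a n.
Proof. by apply: eq_card => x; rewrite !inE andbT. Qed.

Lemma sum_delta (y : 'I_r -> nat) i :
  \sum_(k < r) a k * (y k + (k == i)) = \sum_(k < r) a k * y k + a i.
Proof.
rewrite -[RHS]addnC.
under eq_bigr => k _ do rewrite mulnDr.
rewrite big_split /= addnC; congr (_ + _).
rewrite (bigD1 i) //= eqxx muln1 big1 ?addn0 // => k /negbTE ->; by rewrite muln0.
Qed.

Lemma term_le (x : 'I_r -> nat) i : a i * x i <= \sum_(k < r) a k * x k.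
Proof. by rewrite (bigD1 i) //= leq_addr. Qed.

Lemma term2_le (x : 'I_r -> nat) i k : k != i ->
  a k * x k + a i * x i <= \sum_(l < r) a l * x l.
Proof.
move=> ki; rewrite (bigD1 i) //= (bigD1 k) //= addnA [X in X <= _]addnC.
by rewrite leq_addr.
Qed.

Lemma pU_step L i m : i \notin L ->
  pU L (m + a i) = pU L m + pU (i :: L) (m + a i).
Proof.
move=> iL; set N := (m + a i); have eN : N = m + a i by [].
pose A := [set x : {ffun 'I_r -> 'I_N.+1} |
      ((\sum_(k < r) a k * x k)%N == N) && all (fun k => nat_of_ord (x k) == 0) L].
pose B := [set x : {ffun 'I_r -> 'I_N.+1} | nat_of_ord (x i) == 0].
have -> : pU L N = #|A| by [].
have -> : pU (i :: L) N = #|A :&: B|.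
  by apply: eq_card => x; rewrite !inE /= -andbA [X in _ && X]andbC.
rewrite -(cardsID B A) addnC; congr (_ + _).
pose B' := [set y : {ffun 'I_r -> 'I_m.+1} |
      ((\sum_(k < r) a k * y k)%N == m) && all (fun k => nat_of_ord (y k) == 0) L].
have -> : pU L m = #|B'| by [].
have ai := apos i.
pose phi (y : {ffun 'I_r -> 'I_m.+1}) : {ffun 'I_r -> 'I_N.+1} :=
  [ffun k => inord (y k + (k == i))].
have phiE y k : nat_of_ord (phi y k) = (y k + (k == i))%N.
  by rewrite ffunE inordK // ltnS /N; have := ltn_ord (y k); case: (k == i); lia.
rewrite -(@card_in_imset _ _ phi B'); last first.
  move=> y1 y2 _ _ e; apply/ffunP => k; apply: val_inj => /=.
  by have := congr1 (fun f : {ffun 'I_r -> 'I_N.+1} => nat_of_ord (f k)) e; rewrite /= !phiE => /addIn.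
apply: eq_card => x; rewrite [in LHS]inE [in LHS]inE [in LHS]inE /=. symmetry.
apply/imsetP/idP.
  move=> [y]; rewrite inE => /andP [/eqP sy ay] ->.
  rewrite phiE eqxx addn1 /=.
  under eq_bigr => k _ do rewrite phiE.
  rewrite sum_delta sy eqxx /=.
  apply/allP => k kL; rewrite phiE.
  have -> : (k == i) = false by apply/negbTE; apply: contraNneq iL => <-.
  by rewrite addn0; exact: (allP ay).
move=> /and3P [xi /eqP sx ax].
have xi1 : 0 < x i by rewrite lt0n.
have bnd k : (x k - (k == i) < m.+1)%N.
  have [ki|ki] := eqVneq k i.
    rewrite ki; have := term_le (fun k => nat_of_ord (x k)) i; rewrite /= sx.
    have h := leq_pmull (x i - 1) ai; rewrite mulnBr muln1 in h. 
    move: h; move: (a i * x i) (nat_of_ord (x i)) => P X; rewrite eN; lia.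
  have := @term2_le (fun k => nat_of_ord (x k)) i k ki; rewrite /= sx subn0.
  have h1 := leq_pmull (x k) (apos k); have h2 : a i <= a i * x i by rewrite leq_pmulr.
  move: h1 h2; move: (a k * x k) (a i * x i) (nat_of_ord (x k)) => P1 P2 X.
  rewrite eN; lia.
pose y : {ffun 'I_r -> 'I_m.+1} := [ffun k => inord (x k - (k == i))].
have yE k : nat_of_ord (y k) = (x k - (k == i))%N by rewrite ffunE inordK.
have phiy : x = phi y.
  apply/ffunP => k; apply: val_inj => /=; rewrite phiE yE.
  have [->|ki] := eqVneq k i; last by rewrite subn0 addn0.
  by rewrite subnK.
exists y => //; rewrite inE; apply/andP; split.
  apply/eqP; move: sx; rewrite phiy.
  under eq_bigr => k _ do rewrite phiE.
  by rewrite sum_delta /N => /eqP; rewrite eqn_add2r => /eqP.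
apply/allP => k kL; rewrite yE.
have -> : (k == i) = false by apply/negbTE; apply: contraNneq iL => <-.
by rewrite subn0; exact: (allP ax).
Qed.


Lemma pU_all n : 0 < n -> pU (enum 'I_r) n = 0.
Proof.
move=> n0; apply/eqP; rewrite cards_eq0; apply/eqP/setP => x; rewrite !inE.
apply/negbTE/negP => /andP [/eqP s /allP h].
move: s; rewrite big1 => [s|k _]; first by move: n0; rewrite -s.
by have := h k (mem_enum _ k); move=> /eqP ->; rewrite muln0.
Qed.

Variable C : nzRingType.
Definition Fop (c : nat) (g : nat -> C) : nat -> C := fun n => (g (n + c)%N - g n)%R.
Definition Fchain (L : seq 'I_r) (g : nat -> C) := foldr (fun i g => Fop (a i) g) g L.

Lemma Fchain_pU L : uniq L -> forall n,
  Fchain L (fun n => (p_a a n)%:R%R) n = (pU L (n + \sum_(i <- L) a i))%:R%R.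
Proof.
elim: L => [|i L IH] /=; first by move=> _ n; rewrite big_nil addn0 pU_nil.
move=> /andP [iL uL] n; rewrite /Fop !IH // big_cons.
by rewrite (addnAC n (a i)) (@pU_step L i _ iL) natrD addrC addKr -addnA (addnC (a i)).

Qed.

End Comb.

Local Open Scope ring_scope.

Section PolyOps.
Variable C : numFieldType.

Lemma coef_size_lt (p : {poly C}) i : p`_i != 0 -> (i < size p)%N.
Proof. by move=> h; rewrite ltnNge; apply/negP => /leq_sizeP /(_ i (leqnn _)) /eqP; rewrite (negbTE h). Qed.

Lemma sizeD_same (p q : {poly C}) n :
  size p = n.+1 -> size q = n.+1 -> lead_coef p + lead_coef q != 0 ->
  size (p + q) = n.+1 /\ lead_coef (p + q) = lead_coef p + lead_coef q.
Proof.
move=> sp sq hl.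
have hc : (p + q)`_n = lead_coef p + lead_coef q by rewrite coefD !lead_coefE sp sq.
have hs : size (p + q) = n.+1.
  apply/eqP; rewrite eqn_leq; apply/andP; split.
    by apply: leq_trans (size_polyD _ _) _; rewrite sp sq maxnn.
  by apply: coef_size_lt; rewrite hc.
by split => //; rewrite lead_coefE hs.
Qed.

Definition Delta (c : C) (Q : {poly C}) := Q \Po ('X + c%:P) - Q.

Lemma comp_const (p : {poly C}) (q : {poly C}) : (size p <= 1)%N -> p \Po q = p.
Proof. by move=> /size1_polyC ->; rewrite comp_polyC. Qed.

Lemma Delta_size (c : C) : c != 0 -> forall n (Q : {poly C}), size Q = n.+2 ->
  size (Delta c Q) = n.+1 /\ lead_coef (Delta c Q) = (n.+1)%:R * c * lead_coef Q.
Proof.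
move=> c0 n Q; elim/poly_ind: Q n => [|p k IH] n; first by rewrite size_poly0.
rewrite size_MXaddC; case: ifP => [//|_] [sp].
have p0 : p != 0 by rewrite -size_poly_gt0 sp.
have lcQ : lead_coef (p * 'X + k%:P) = lead_coef p.
  by rewrite lead_coefDl ?lead_coefMX // size_mulX // size_polyC; case: (k != 0); rewrite sp.
have eD : Delta c (p * 'X + k%:P) = Delta c p * 'X + c%:P * (p \Po ('X + c%:P)).
  rewrite /Delta comp_polyD comp_polyM comp_polyX comp_polyC; ring.
have scomp : size (p \Po ('X + c%:P)) = size p by rewrite size_comp_poly2 // size_XaddC.
have lcomp : lead_coef (p \Po ('X + c%:P)) = lead_coef p.
  by rewrite lead_coef_comp ?size_XaddC // lead_coefXaddC expr1n mulr1.
rewrite eD lcQ.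
case: n sp => [|m] sp.
  have -> : Delta c p = 0 by rewrite /Delta comp_const ?sp // subrr.
  rewrite mul0r add0r mul_polyC size_scale // scomp sp; split => //.
  by rewrite lead_coefZ lcomp mul1r.
have [s1 l1] := IH _ sp.
have hl : lead_coef (Delta c p * 'X) + lead_coef (c%:P * (p \Po ('X + c%:P))) != 0.
  rewrite lead_coefMX l1 mul_polyC lead_coefZ lcomp.
  have -> : (m.+1)%:R * c * lead_coef p + c * lead_coef p = (m.+2)%:R * c * lead_coef p.
    by rewrite [(m.+2)%:R]mulrSr; ring.
  by rewrite !mulf_neq0 ?pnatr_eq0 // lead_coef_eq0.
have [] := @sizeD_same _ _ m.+1 _ _ hl.
- by rewrite size_mulX ?s1 // -size_poly_gt0 s1.
- by rewrite mul_polyC size_scale // scomp sp.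
move=> -> ->; split => //.
rewrite lead_coefMX l1 mul_polyC lead_coefZ lcomp [(m.+2)%:R]mulrSr; ring.
Qed.

Definition tOp (mu : C) (c : nat) (Q : {poly C}) := mu *: (Q \Po ('X + (c%:R)%:P)) - Q.

Lemma tOp_size (mu : C) (c : nat) (Q : {poly C}) : (0 < c)%N -> (size Q - (mu == 1%R) <= size (tOp mu c Q))%N.
Proof.
move=> c0; have cn0 : (c%:R : C) != 0 by rewrite pnatr_eq0 -lt0n.
have [->|mu1] := eqVneq mu 1.
  rewrite /tOp scale1r -/(Delta _ Q).
  case sQ: (size Q) => [|[|n]] //.
  by have [-> _] := @Delta_size _ cn0 _ _ sQ; rewrite subn1.
rewrite subn0.
have [->|Q0] := eqVneq Q 0; first by rewrite size_poly0.
have [->|mu0] := eqVneq mu 0; first by rewrite /tOp scale0r sub0r size_polyN.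
case sQ: (size Q) => [|n]; first by [].
have [] := @sizeD_same (mu *: (Q \Po ('X + (c%:R)%:P))) (- Q) n.
- by rewrite size_scale // size_comp_poly2 ?size_XaddC.
- by rewrite size_polyN.
- rewrite lead_coefZ lead_coef_comp ?size_XaddC // lead_coefXaddC expr1n mulr1 lead_coefN.
  have -> : mu * lead_coef Q + - lead_coef Q = (mu - 1) * lead_coef Q by ring.
  by rewrite mulf_neq0 ?subr_eq0 // lead_coef_eq0.
by move=> -> _.
Qed.

Variable I : Type.
Definition Tch (mu : I -> C) (c : I -> nat) (L : seq I) (Q : {poly C}) :=
  foldr (fun i Q => tOp (mu i) (c i) Q) Q L.

Lemma Tch_size (mu : I -> C) (c : I -> nat) (L : seq I) (Q : {poly C}) : (forall i, 0 < c i)%N ->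
  (size Q - count (fun i => mu i == 1%R) L <= size (Tch mu c L Q))%N.
Proof.
move=> cp; elim: L => [|i L IH] /=; first by rewrite subn0.
have := @tOp_size (mu i) (c i) (Tch mu c L Q) (cp i).
move: IH; case: (mu i == 1) => /=; lia.
Qed.

End PolyOps.

Local Open Scope complex_scope.

Lemma cis_exp (R : realType) (t : R) n :
  (cos t +i* sin t) ^+ n = cos (n%:R * t) +i* sin (n%:R * t).
Proof.
elim: n => [|n IH]; first by rewrite !mul0r cos0 sin0.
rewrite exprS IH.
rewrite -addn1 natrD mulrDl mul1r cosD sinD.
rewrite [LHS]/GRing.mul /=.
congr (_ +i* _); ring.
Qed.

Lemma rho_exp (R : realType) D n :
  rho R D ^+ n = cos (n%:R * (2 * pi / D%:R)) +i* sin (n%:R * (2 * pi / D%:R)).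
Proof. by rewrite /rho cis_exp. Qed.

Lemma rhoD (R : realType) D : (0 < D)%N -> rho R D ^+ D = 1.
Proof.
move=> D0; rewrite rho_exp mulrCA divff ?pnatr_eq0 -?lt0n // mulr1.
by rewrite mulr_natl cos2pi sin2pi.
Qed.

Lemma rho_eq1 (R : realType) D u : (0 < D)%N -> rho R D ^+ u = 1 -> (D %| u)%N.
Proof.
move=> D0; rewrite (divn_eq u D) exprD mulnC exprM rhoD // expr1n mul1r.
set s := (u %% D)%N.
have sD : (s < D)%N by rewrite ltn_mod.
clearbody s.
rewrite dvdn_addr; last by apply/dvdn_mulr/dvdnn.
case: (posnP s) => [->//|s0].
rewrite rho_exp => /(congr1 (@complex.Re R)) /= hc.
exfalso.
pose y : R := s%:R * (pi / D%:R).
have ey : s%:R * (2 * pi / D%:R) = y *+ 2 by rewrite /y; rewrite -mulr_natl; field; rewrite pnatr_eq0 -lt0n.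
rewrite ey cos_mulr2n cos2sin2 in hc.
have : 0 < sin y.
  apply: sin_gt0_pi; apply/andP; split.
    by rewrite /y mulr_gt0 ?ltr0n // divr_gt0 ?pi_gt0 ?ltr0n.
  rewrite /y mulrA ltr_pdivrMr ?ltr0n // mulrC ltr_pM2l ?pi_gt0 // ltr_nat //.
have : sin y ^+ 2 = 0.
  by move: hc; set z := sin y ^+ 2; rewrite mulr2n => hc; lra.
move/eqP; rewrite expf_eq0 /= => /eqP ->; by rewrite ltxx.
Qed.

Lemma poly_inf_roots (C : numDomainType) (p : {poly C}) (f : nat -> nat) :
  injective f -> (forall t, p.[(f t)%:R] = 0) -> p = 0.
Proof.
move=> fi hr; apply/eqP; apply/negPn/negP => p0.
pose rs := [seq ((f t)%:R : C) | t <- iota 0 (size p)].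
have ha : all (root p) rs by apply/allP => x /mapP [t _ ->]; apply/rootP.
have hu : uniq rs.
  by rewrite map_inj_uniq ?iota_uniq // => x y /eqP; rewrite eqr_nat => /eqP; exact: fi.
by have := max_poly_roots p0 ha hu; rewrite size_map size_iota ltnn.
Qed.

Lemma mod_lemma D s n : (0 < D)%N -> (s < D)%N -> (D %| s + (D - 1) * n)%N = (s == n %% D)%N.
Proof.
move=> D0 sD.
have e : (s + (D - 1) * n + n = n * D + s)%N.
  by rewrite -addnA addnC; congr (_ + _)%N; rewrite mulnC -{2}(muln1 n) -mulnDr subnK.
apply/idP/eqP.
  rewrite /dvdn => /eqP h.
  have := congr1 (modn^~ D) e; rewrite modnMDl -modnDml h add0n (modn_small sD) => <-.
  by [].
move=> hs; apply/eqP.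
have : (s + (D - 1) * n + n == 0 + n %[mod D])%N.
  by rewrite e add0n modnMDl (modn_small sD) hs.
by rewrite eqn_modDr mod0n => /eqP.
Qed.

Section Roots.
Variable R : realType.
Variable D : nat.
Hypothesis D0 : (0 < D)%N.
Local Notation C := (R[i]).
Local Notation z := (rho R D).

Lemma zmod m : z ^+ m = z ^+ (m %% D).
Proof. by rewrite {1}(divn_eq m D) exprD mulnC exprM rhoD // expr1n mul1r. Qed.

Lemma ortho u : \sum_(k < D) z ^+ (k * u) = if (D %| u)%N then D%:R else 0.
Proof.
have [du|ndu] := boolP (D %| u)%N.
  have zu : z ^+ u = 1 by rewrite zmod; move/eqP: du => ->.
  under eq_bigr => k _ do rewrite mulnC exprM zu expr1n.
  by rewrite sumr_const card_ord.
have w1 : z ^+ u != 1 by apply/negP => /eqP /(@rho_eq1 R D u D0); rewrite (negbTE ndu).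
have wD : (z ^+ u) ^+ D = 1 by rewrite -exprM mulnC exprM rhoD // expr1n.
under eq_bigr => k _ do rewrite mulnC exprM.
apply/eqP; move/eqP: (subrX1 (z ^+ u) D); rewrite wD subrr eq_sym mulf_eq0 subr_eq0 (negbTE w1) /=.
by move/eqP => ->.
Qed.

Lemma dft (V : lmodType C) (Y : nat -> V) l : (l < D)%N ->
  \sum_(s < D) z ^+ (l * s) *: \sum_(k < D) (z ^+ (k * (D - 1))) ^+ s *: Y k = D%:R *: Y l.
Proof.
move=> lD.
under eq_bigr => s _ do rewrite scaler_sumr.
rewrite exchange_big /=.
under eq_bigr => k _.
  under eq_bigr => s _ do rewrite scalerA -exprM -exprD -mulnDl mulnC.
  rewrite -scaler_suml ortho mulnC mod_lemma // (modn_small (ltn_ord k)).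
  over.
rewrite (bigD1 (Ordinal lD)) //= eqxx big1 ?addr0 // => k /negbTE.
by rewrite eq_sym -val_eqE /= => ->; rewrite scale0r.
Qed.

Lemma ep_unique (Q : nat -> {poly C}) N :
  (forall n, (N <= n)%N -> \sum_(k < D) (Q k).[n%:R] * (z ^+ (k * (D - 1))) ^+ n = 0) ->
  forall l, (l < D)%N -> Q l = 0.
Proof.
move=> hQ l lD.
pose H s := \sum_(k < D) (z ^+ (k * (D - 1))) ^+ s *: Q k.
have H0 : forall s, H s = 0.
  move=> s; apply: (@poly_inf_roots _ _ (fun t => s + D * (N + t))%N).
    by move=> x y /eqP; rewrite eqn_add2l eqn_mul2l eqn_add2l (gtn_eqF D0) /= => /eqP.
  move=> t; rewrite /H horner_sum -[RHS](hQ (s + D * (N + t))%N); last by nia.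
  apply: eq_bigr => k _; rewrite hornerZ mulrC; congr (_ * _).
  have wD : (z ^+ (k * (D - 1))) ^+ D = 1 by rewrite -exprM mulnC exprM rhoD // expr1n.
  by rewrite exprD (exprM _ D) wD expr1n mulr1.
have := @dft _ Q l lD.
under eq_bigr => s _ do rewrite -/(H s) H0 scaler0.
by rewrite big1 // => /esym /eqP; rewrite scaler_eq0 pnatr_eq0 (gtn_eqF D0) /= => /eqP.
Qed.


Definition w (k : nat) := z ^+ (k * (D - 1)).
Definition E (Q : nat -> {poly C}) (n : nat) := \sum_(k < D) (Q k).[n%:R] * w k ^+ n.

Lemma Fchain_E r (a : 'I_r -> nat) (L : seq 'I_r) (g : nat -> C) (Q : nat -> {poly C}) :
  (forall n, g n = E Q n) ->
  forall n, @Fchain r a C L g n = E (fun k => @Tch C _ (fun i => w k ^+ a i) a L (Q k)) n.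
Proof.
move=> hg; elim: L => [|i L IH] n /=; first exact: hg.
rewrite /Fop !IH /E -sumrB; apply: eq_bigr => k _.
rewrite /tOp hornerD hornerN hornerZ horner_comp hornerD hornerX hornerC natrD exprD; ring.
Qed.

Lemma inv_pow k n : (z ^+ k) ^- n = w k ^+ n.
Proof.
have xy : (z ^+ k) ^+ n * w k ^+ n = 1.
  have e : (k + k * (D - 1) = D * k)%N by rewrite -{1}(muln1 k) -mulnDr subnKC // mulnC.
  by rewrite /w -exprMn -exprD e exprM rhoD // !expr1n.
have x0 : (z ^+ k) ^+ n != 0 by apply/negP => /eqP x0; move: xy; rewrite x0 mul0r => /eqP; rewrite eq_sym oner_eq0.
by apply: (mulfI x0); rewrite mulfV // xy.
Qed.

End Roots.

Lemma rho_div (R : realType) D j : (0 < D)%N -> (0 < j)%N -> (j %| D)%N -> rho R j = rho R D ^+ (D %/ j).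
Proof.
move=> D0 j0 jD; rewrite rho_exp natr_div // ?unitfE ?pnatr_eq0 -?lt0n //.
rewrite /rho; congr (cos _ +i* sin _); field; by rewrite !pnatr_eq0 -!lt0n j0 D0.
Qed.

Lemma per_d r (a : 'I_r -> nat) D d : is_quasipoly_decomp a D d ->
  forall m n, (m < r)%N -> d m n = d m (n %% D)%N.
Proof.
move=> [hp _] m n mr; rewrite {1}(divn_eq n D) addnC.
elim: (n %/ D)%N => [|q IH]; first by rewrite mul0n addn0.
by rewrite mulSn addnCA addnC hp.
Qed.

Local Close Scope complex_scope.

Theorem proposition4p1 (R : realType) (r : nat) (a : 'I_r -> nat) (D : nat)
    (d : nat -> nat -> rat) (P : R[i] -> {poly R[i]}) (j : nat) :
  (1 <= r)%N ->
  (forall i, (0 < a i)%N) ->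
  (0 < D)%N ->
  (forall i, (a i %| D)%N) ->
  (1 <= j)%N ->
  (exists i, (j %| a i)%N) ->
  is_quasipoly_decomp a D d ->
  is_root_decomp a D P ->
  forall n : nat,
    sylvester_wave P j n =
    (rho R j) ^- n * \sum_(m < mult_j a j) Rcoef R D d j m.+1 * (n%:R) ^+ m.
Proof.
move=> r1 apos D0 aD j1 [i0 ji0] hq hroot n.
pose z := rho R D.
pose Pk k := P (z ^+ k).
have jD : (j %| D)%N by apply: dvdn_trans ji0 (aD i0).
pose l := ((D %/ j) %% D)%N.
have lD : (l < D)%N by rewrite ltn_mod.
have zl : z ^+ l = rho R j by rewrite (@rho_div R D j D0 j1 jD) [RHS](@zmod R D D0).
have h1 : forall n, (p_a a n)%:R = E R D Pk n.
  move=> m; rewrite hroot /E; apply: eq_bigr => k _; by rewrite inv_pow.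
pose A s : {poly R[i]} := \sum_(m < r) ratr (d m s) *: 'X^m.
pose Qk k : {poly R[i]} := (D%:R)^-1 *: \sum_(s < D) z ^+ (k * s) *: A s.
have h2 : forall n, (p_a a n)%:R = E R D Qk n.
  move=> m.
  have L1 : (p_a a m)%:R = (A (m %% D)%N).[m%:R].
    have := congr1 (@ratr R[i]) (hq.2 m); rewrite rmorph_nat => ->.
    rewrite rmorph_sum /A horner_sum; apply: eq_bigr => k _.
    by rewrite rmorphM rmorphXn rmorph_nat hornerZ hornerXn (@per_d r a D d hq _ _ (ltn_ord k)).
  have tf : forall k s, z ^+ (k * s) * (A s).[m%:R] * w R D k ^+ m
      = (A s).[m%:R] * z ^+ (k * (s + (D - 1) * m)).
    move=> k s; rewrite mulrAC mulrC; congr (_ * _).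
    by rewrite /w -exprM -exprD mulnDr mulnA.
  rewrite L1 /E; symmetry.
  under eq_bigr => k _ do rewrite /Qk hornerZ horner_sum mulr_sumr mulr_suml.
  rewrite exchange_big /=.
  under eq_bigr => s _ do under eq_bigr => k _ do rewrite hornerZ -mulrA tf.
  under eq_bigr => s _ do rewrite -mulr_sumr -mulr_sumr (@ortho R D D0) (@mod_lemma D s m D0 (ltn_ord s)).
  have mD : (m %% D < D)%N by rewrite ltn_pmod.
  rewrite (bigD1 (Ordinal mD)) //= eqxx big1 ?addr0.
    by rewrite mulrCA mulVf ?mulr1 // pnatr_eq0 -lt0n.
  move=> s /negbTE hs.
  have -> : (nat_of_ord s == m %% D)%N = false by exact: hs.
  by rewrite mulr0 mulr0.
have h3 : Pk l = Qk l.
  apply/eqP; rewrite -subr_eq0; apply/eqP.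
  apply: (@ep_unique R D D0 (fun k => Pk k - Qk k) 0%N) => // m _.
  under eq_bigr => k _ do rewrite hornerD hornerN mulrBl.
  by rewrite sumrB -/(E R D Pk m) -/(E R D Qk m) -h1 -h2 subrr.
have hPj : P (rho R j) = \sum_(m < r) Rcoef R D d j m.+1 *: 'X^m.
  rewrite -[in LHS]zl -/(Pk l) h3 /Qk /Rcoef /=.
  under [RHS]eq_bigr => m _ do rewrite -scalerA scaler_suml.
  rewrite -scaler_sumr; congr (_ *: _).
  rewrite exchange_big; apply: eq_bigr => s _; rewrite /A scaler_sumr; apply: eq_bigr => m _.
  by rewrite scalerA exprM zl.
have hsize : (size (P (rho R j)) <= mult_j a j)%N.
  have hF : forall m, @Fchain r a R[i] (enum 'I_r) (fun n => (p_a a n)%:R) m = 0.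
    move=> m; rewrite (@Fchain_pU r a apos) ?enum_uniq // pU_all //.
    rewrite (bigD1_seq i0) ?mem_enum ?enum_uniq //=; have := apos i0; lia.
  have hT := @Fchain_E R D r a (enum 'I_r) _ _ h1.
  have T0 := @ep_unique R D D0 _ 0%N (fun m _ => etrans (esym (hT m)) (hF m)) l lD.
  have := @Tch_size _ _ (fun i => w R D l ^+ a i) a (enum 'I_r) (Pk l) apos.
  rewrite T0 size_poly0 leqn0 subn_eq0 -/(Pk l) => hs.
  rewrite -zl; apply: (leq_trans hs); rewrite /mult_j cnt; apply: sub_count => c /eqP.
  move: (a c) => u; rewrite /w -exprM -mulnA exprM -/z zl (@rho_div R D j D0 j1 jD) -exprM.
  move/(@rho_eq1 R D _ D0).
  have Dj0 : (0 < D %/ j)%N by rewrite divn_gt0 // dvdn_leq.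
  have eD : D = (D %/ j * j)%N by rewrite divnK.
  rewrite {1}eD dvdn_pmul2l //.
  have cD : coprime D (D - 1) by rewrite -{1}(subnK D0) addn1 coprimeSn.
  by rewrite (Gauss_dvdr _ (coprime_dvdl jD cD)).
have mr : (mult_j a j <= r)%N by rewrite /mult_j (leq_trans (max_card _)) ?card_ord.
rewrite /sylvester_wave mulrC; congr (_ * _).
rewrite (horner_coef_wide (n%:R) hsize). apply: eq_bigr => m _.
rewrite hPj coef_sum (bigD1 (widen_ord mr m)) //= coefZ coefXn eqxx mulr1 big1 ?addr0 //.
move=> k /negbTE km; rewrite coefZ coefXn.
have -> : (m == k :> nat) = false by rewrite eq_sym; exact: km.
by rewrite mulr0.
Qed.
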